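(* For all $n\ge 1$, $|F_n(321,31524)|=\dfrac{P_n+P_{n-1}+1}{2}$, where $P_n$ are the Pell numbers: $P_0=0$, $P_1=1$, $P_n=2P_{n-1}+P_{n-2}$ for $n\ge2$.
   Context: A permutation $\pi$ avoids a classical pattern $p\in S_k$ if no subsequence of $\pi$ of length $k$ is order-isomorphic to $p$. A Fishburn permutation is a permutation $\pi=\pi_1\cdots\pi_n$ of $[n]$ for which there are no indices $i<j$ with $\pi_j<\pi_i<\pi_{i+1}$ and $\pi_i=\pi_j+1$. $F_n(\sigma_1,\dots,\sigma_k)$ denotes the set of Fishburn permutations of length $n$ avoiding each of the classical patterns $\sigma_1,\dots,\sigma_k$. *)

(* Defs.v *)
From mathcomp Require Import all_boot all_fingroup.
Set Implicit Arguments. Unset Strict Implicit. Unset Printing Implicit Defensive.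

(* Permutations of [n] are represented as {perm 'I_n} (values 0..n-1). *)

Definition contains (n : nat) (s : {perm 'I_n}) (p : seq nat) : bool :=
  [exists f : {ffun 'I_(size p) -> 'I_n},
    [forall a : 'I_(size p), forall b : 'I_(size p),
       ((a < b) ==> (f a < f b)) &&
       ((nth 0 p a < nth 0 p b) == (s (f a) < s (f b)))]].

Definition avoids (n : nat) (s : {perm 'I_n}) (p : seq nat) : bool :=
  ~~ contains s p.

Definition fishburn (n : nat) (s : {perm 'I_n}) : bool :=
  ~~ [exists i : 'I_n, exists j : 'I_n, exists i1 : 'I_n,
      [&& val i1 == (val i).+1, i < j, s j < s i, s i < s i1
        & val (s i) == (val (s j)).+1]].

Fixpoint pell (n : nat) : nat :=
  match n with
  | 0 => 0
  | 1 => 1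
  | (m.+1 as k).+1 => 2 * pell k + pell m
  end.

Definition F321_31524 (n : nat) : {set {perm 'I_n}} :=
  [set s : {perm 'I_n} | fishburn s && avoids s [:: 3; 2; 1]
                          && avoids s [:: 3; 1; 5; 2; 4]].

(* Main.v *)
Require Import Defs.
From mathcomp Require Import all_boot all_fingroup zify.
Set Implicit Arguments. Unset Strict Implicit. Unset Printing Implicit Defensive.

Local Notation "s !! i" := (nth 0 s i) (at level 2, left associativity).

Lemma bumpE h i : bump h i = if h <= i then i.+1 else i.
Proof. by rewrite /bump; case: leqP. Qed.
Lemma unbumpE h i : unbump h i = if h < i then i.-1 else i.
Proof. by rewrite /unbump; case: ltnP => _ /=; rewrite ?subn1 ?subn0. Qed.

Ltac bsolve := rewrite ?bumpE ?unbumpE; repeat case: ifP; move=> *; lia.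

Lemma bump_lt h a b : (bump h a < bump h b) = (a < b).
Proof. apply/idP/idP; bsolve. Qed.
Lemma unbump_lt h a b : a != h -> b != h -> (unbump h a < unbump h b) = (a < b).
Proof. move=> /eqP ? /eqP ?; apply/idP/idP; bsolve. Qed.
Lemma bump_succ h a : a.+1 != h -> bump h a.+1 = (bump h a).+1.
Proof. move=> /eqP ?; bsolve. Qed.
Lemma unbump_succ h a : a != h -> a.+1 != h -> unbump h a.+1 = (unbump h a).+1.
Proof. move=> /eqP ? /eqP ?; bsolve. Qed.
Lemma bump_succ_inv h a b : bump h a = (bump h b).+1 -> a = b.+1.
Proof. bsolve. Qed.
Lemma unbump_size h i n : i != h -> h <= n -> i < n.+1 -> unbump h i < n.
Proof. move=> /eqP ? ? ?; bsolve. Qed.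
Lemma bump_size h i n : i < n -> bump h i < n.+1.
Proof. bsolve. Qed.

Definition ins (p v : nat) (t : seq nat) : seq nat :=
  take p (map (bump v) t) ++ v :: drop p (map (bump v) t).

Lemma size_ins p v (t : seq nat) : size (ins p v t) = (size t).+1.
Proof.
by rewrite /ins size_cat /= addnS -size_cat cat_take_drop size_map.
Qed.

Lemma nth_ins_p p v (t : seq nat) : p <= size t -> (ins p v t) !! p = v.
Proof.
move=> hp; rewrite /ins nth_cat size_take size_map.
have -> : (if p < size t then p else size t) = p by case: ltnP => //; lia.
by rewrite ltnn subnn.
Qed.

Lemma nth_ins p v (t : seq nat) i : p <= size t -> i != p -> i < (size t).+1 ->
  (ins p v t) !! i = bump v (t !! (unbump p i)).
Proof.
move=> hp /eqP hip hi; rewrite /ins nth_cat size_take size_map.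
have -> : (if p < size t then p else size t) = p by case: ltnP => //; lia.
case: ltnP => h.
  rewrite nth_take // (nth_map 0); last lia.
  by rewrite unbumpE; case: ifP => //; lia.
have -> : i - p = (i - p).-1.+1 by lia.
rewrite /= nth_drop (nth_map 0); last lia.
congr (bump v (t !! _)); rewrite unbumpE; case: ifP; lia.
Qed.

Lemma nth_ins_bump p v (t : seq nat) j : p <= size t -> j < size t ->
  (ins p v t) !! (bump p j) = bump v (t !! j).
Proof.
move=> hp hj; rewrite nth_ins ?bumpK //; first by rewrite eq_sym neq_bump.
exact: bump_size.
Qed.

Definition isperm n (s : seq nat) := [&& size s == n, uniq s & all (fun x => x < n) s].

Lemma mem_ins p v (t : seq nat) x : (x \in ins p v t) = (x == v) || (x \in map (bump v) t).
Proof.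
rewrite /ins mem_cat in_cons orbCA -mem_cat cat_take_drop //.
Qed.

Lemma uniq_ins p v (t : seq nat) : uniq (ins p v t) = uniq t.
Proof.
have H := perm_catCA (take p (map (bump v) t)) [:: v] (drop p (map (bump v) t)).
rewrite /ins (perm_uniq (permEl H)) /= cat_take_drop.
rewrite (map_inj_uniq (can_inj (bumpK v))).
case: (uniq t); rewrite ?andbT ?andbF //.
apply/negP => /mapP [y _ hy]; have := neq_bump v y; by rewrite -hy eqxx.
Qed.

Lemma isperm_ins (n : nat) p v (t : seq nat) : isperm n t -> v <= n -> isperm n.+1 (ins p v t).
Proof.
case/and3P => /eqP hs hu ha hv; apply/and3P; split.
- by rewrite size_ins hs.
- by rewrite uniq_ins.
apply/allP => x; rewrite mem_ins => /orP [/eqP -> //| /mapP [y hy ->]].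
by rewrite ltnS; move/allP: ha => /(_ y hy); bsolve.
Qed.

Lemma isperm_ins_inv (n : nat) p v (t : seq nat) : isperm n.+1 (ins p v t) -> isperm n t.
Proof.
case/and3P; rewrite size_ins uniq_ins => /eqP [hs] hu ha; apply/and3P; split=> //.
  by rewrite hs.
have hv : v < n.+1 by move/allP: ha => /(_ v); rewrite mem_ins eqxx; apply.
apply/allP => y hy.
have : bump v y < n.+1.
  by move/allP: ha => /(_ (bump v y)); rewrite mem_ins map_f ?orbT //; apply.
by move: hv; bsolve.
Qed.

Definition del (p : nat) (s : seq nat) : seq nat :=
  map (unbump (s !! p)) (take p s ++ drop p.+1 s).

Lemma size_del p (s : seq nat) : p < size s -> size (del p s) = (size s).-1.
Proof. move=> hp; rewrite /del size_map size_cat size_take size_drop; case: ltnP; lia. Qed.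

Lemma ins_del p (s : seq nat) : uniq s -> p < size s -> ins p (s !! p) (del p s) = s.
Proof.
move=> hu hp.
have hsz : size (del p s) = (size s).-1 by apply: size_del.
apply: (@eq_from_nth _ 0); first by rewrite size_ins hsz; lia.
move=> i; rewrite size_ins hsz => hi.
case: (eqVneq i p) => [->|hip]; first by rewrite nth_ins_p // hsz; lia.
rewrite nth_ins //; last by rewrite hsz; lia.
  2: by rewrite hsz; lia.
rewrite /del (nth_map 0); last by rewrite size_cat size_take size_drop hp; move/eqP: hip => hip; bsolve.
have -> : (take p s ++ drop p.+1 s) !! (unbump p i) = s !! i.
  rewrite nth_cat size_take hp.
  move: hip => /eqP hip; rewrite unbumpE.
  case: (ltnP p i) => hpi.
    have -> : i.-1 < p = false by apply/negbTE; lia.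
    rewrite nth_drop; congr (s !! _); lia.
  have -> : i < p by lia.
  by rewrite nth_take //; lia.
have hi' : i < size s by lia.
by rewrite unbumpKcond nth_uniq // (negbTE hip).
Qed.

Definition viol (s : seq nat) i j :=
  [&& i < j, j < size s, s !! j < s !! i, s !! i < s !! i.+1 & s !! i <= (s !! j).+1].
Definition fishL s := forall i j, ~~ viol s i j.
Definition occ3 (s : seq nat) i j k :=
  [&& i < j, j < k, k < size s, s !! k < s !! j & s !! j < s !! i].
Definition c321 s := exists i j k, occ3 s i j k.
Definition occ5 (s : seq nat) a b c d e :=
  [&& a < b, b < c, c < d, d < e, e < size s,
   s !! b < s !! d, s !! d < s !! a, s !! a < s !! e & s !! e < s !! c].
Definition c31524 s := exists a b c d e, occ5 s a b c d e.
Definition good s := fishL s /\ ~ c321 s /\ ~ c31524 s.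

Lemma bump_ltS h i n : i < n -> bump h i < n.+1.
Proof. bsolve. Qed.

Lemma c321_up p v (t : seq nat) : p <= size t -> c321 t -> c321 (ins p v t).
Proof.
move=> hp [i [j [k /and5P [h1 h2 h3 h4 h5]]]].
exists (bump p i), (bump p j), (bump p k); apply/and5P.
rewrite !nth_ins_bump ?bump_lt ?size_ins ?bump_ltS //; lia.
Qed.

Lemma c31524_up p v (t : seq nat) : p <= size t -> c31524 t -> c31524 (ins p v t).
Proof.
move=> hp [a [b [c [d [e /and5P [h1 h2 h3 h4 /and5P [h5 h6 h7 h8 h9]]]]]]].
exists (bump p a), (bump p b), (bump p c), (bump p d), (bump p e).
rewrite /occ5 !nth_ins_bump ?bump_lt ?size_ins ?bump_ltS //; try lia.
Qed.

Lemma c321_down p v (t : seq nat) i j k : p <= size t -> occ3 (ins p v t) i j k ->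
  i != p -> j != p -> k != p -> c321 t.
Proof.
move=> hp /and5P [h1 h2 h3 h4 h5] hi hj hk; rewrite size_ins in h3.
exists (unbump p i), (unbump p j), (unbump p k); apply/and5P.
move: h4 h5; rewrite !nth_ins ?bump_lt ?unbump_lt //; try lia.
move=> -> ->; split=> //; apply: unbump_size => //; lia.
Qed.

Lemma c31524_down p v (t : seq nat) a b c d e : p <= size t -> occ5 (ins p v t) a b c d e ->
  a != p -> b != p -> c != p -> d != p -> e != p -> c31524 t.
Proof.
move=> hp /and5P [h1 h2 h3 h4 /and5P [h5 h6 h7 h8 h9]] ha hb hc hd he; rewrite size_ins in h5.
exists (unbump p a), (unbump p b), (unbump p c), (unbump p d), (unbump p e).
move: h6 h7 h8 h9; rewrite /occ5 !nth_ins ?bump_lt ?unbump_lt //; try lia.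
move=> -> -> -> ->; rewrite h1 h2 h3 h4 unbump_size //; lia.
Qed.

Lemma fish_down p v (t : seq nat) : p <= size t -> fishL (ins p v t) ->
  (forall i j, viol t i j -> (i.+1 != p) && ((t !! j).+1 != v)) -> fishL t.
Proof.
move=> hp hs hr i j; apply/negP => hv.
have /andP [/eqP r1 /eqP r2] := hr i j hv.
move/and5P: hv => [h1 h2 h3 h4 h5].
have e5 : t !! i = (t !! j).+1 by apply/eqP; rewrite eqn_leq h5 h3.
have := hs (bump p i) (bump p j); apply/negP/negPn.
have e1 : (bump p i).+1 = bump p i.+1 by rewrite bump_succ //; apply/eqP.
rewrite /viol bump_lt e1 !nth_ins_bump ?bump_lt ?size_ins ?bump_ltS //; try lia.
rewrite h1 h3 h4 e5 bump_succ //=; last by apply/eqP.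
Qed.

Lemma fish_up p v (t : seq nat) : p <= size t -> fishL t ->
  (forall i j, viol (ins p v t) i j -> [&& i != p, j != p & i.+1 != p]) ->
  fishL (ins p v t).
Proof.
move=> hp ht hr i j; apply/negP => hv.
have /and3P [r1 r2 r3] := hr i j hv.
move/and5P: hv => [h1 h2 h3 h4 h5]; rewrite size_ins in h2.
have e5 : (ins p v t) !! i = ((ins p v t) !! j).+1 by apply/eqP; rewrite eqn_leq h5 h3.
have := ht (unbump p i) (unbump p j); apply/negP/negPn.
have e1 : (unbump p i).+1 = unbump p i.+1 by rewrite unbump_succ.
move: h3 h4 e5; rewrite !nth_ins ?size_ins //; try lia.
rewrite /viol unbump_lt // e1 !bump_lt => -> -> /bump_succ_inv ->.
rewrite leqnn !andbT unbump_size //; lia.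
Qed.

Lemma good_up p v (t : seq nat) : p <= size t -> good t ->
  (forall i j, viol (ins p v t) i j -> [&& i != p, j != p & i.+1 != p]) ->
  (forall i j k, occ3 (ins p v t) i j k -> (i == p) || (j == p) || (k == p) -> c321 t) ->
  (forall a b c d e, occ5 (ins p v t) a b c d e ->
      [|| a == p, b == p, c == p, d == p | e == p] -> c31524 t) ->
  good (ins p v t).
Proof.
move=> hp [hf [h3 h5]] rf r3 r5; split; first exact: fish_up.
split.
  move=> [i [j [k H]]]; apply: h3.
  case: (boolP ((i == p) || (j == p) || (k == p))); first exact: r3 H.
  by rewrite !negb_or => /andP [/andP [hi hj] hk]; apply: c321_down H hi hj hk.
move=> [a [b [c [d [e H]]]]]; apply: h5.
case: (boolP [|| a == p, b == p, c == p, d == p | e == p]); first exact: r5 H.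
rewrite !negb_or => /and5P [ha hb hc hd he].
exact: c31524_down H ha hb hc hd he.
Qed.

Lemma good_down p v (t : seq nat) : p <= size t -> good (ins p v t) ->
  (forall i j, viol t i j -> (i.+1 != p) && ((t !! j).+1 != v)) -> good t.
Proof.
move=> hp [hf [h3 h5]] rf; split; first exact: fish_down hf rf.
split; first by move=> H; apply: h3; apply: c321_up.
by move=> H; apply: h5; apply: c31524_up.
Qed.

Lemma nth_inj (s : seq nat) i j : uniq s -> i < size s -> j < size s ->
  s !! i = s !! j -> i = j.
Proof. by move=> hu hi hj /eqP; rewrite nth_uniq // => /eqP. Qed.

Lemma ins2_0 v (t : seq nat) : 2 <= size t -> (ins 2 v t) !! 0 = bump v (t !! 0).
Proof. by move=> h; rewrite -[0]/(bump 2 0) nth_ins_bump //; lia. Qed.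
Lemma ins2_1 v (t : seq nat) : 2 <= size t -> (ins 2 v t) !! 1 = bump v (t !! 1).
Proof. by move=> h; rewrite -[1]/(bump 2 1) nth_ins_bump //; lia. Qed.
Lemma ins0_0 v (t : seq nat) : (ins 0 v t) !! 0 = v.
Proof. by rewrite nth_ins_p. Qed.

Lemma E0_up (t : seq nat) : good t -> good (ins 0 0 t).
Proof.
move=> g; apply: good_up => //.
- move=> i j /and5P [h1 h2 h3 h4 h5]; rewrite andbT.
  case: (eqVneq i 0) => [e|/eqP ne]; last by apply/andP; split; apply/eqP; lia.
  by move: h5 h3; rewrite e ins0_0; lia.
- move=> i j k /and5P [h1 h2 h3 h4 h5] hor.
  have e : i = 0 by move: hor => /orP [/orP [/eqP //|/eqP]|/eqP]; lia.
  subst i.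
  by move: h5; rewrite ins0_0.
- move=> a b c d e /and5P [h1 h2 h3 h4 /and5P [h5 h6 h7 h8 h9]] hor.
  have e0 : a = 0 by move: hor => /orP [/eqP|/orP [/eqP|/orP [/eqP|/orP [/eqP|/eqP]]]]; lia.
  subst a.
  by move: h7; rewrite ins0_0.
Qed.

Lemma ins0_1 v (t : seq nat) : 0 < size t -> (ins 0 v t) !! 1 = bump v (t !! 0).
Proof. by move=> h; rewrite -[1]/(bump 0 0) nth_ins_bump. Qed.

Lemma E1_up (t : seq nat) : good t -> t !! 0 = 0 -> good (ins 0 1 t).
Proof.
move=> g t0; apply: good_up => //.
- move=> i j /and5P [h1 h2 h3 h4 h5]; rewrite andbT.
  case: (eqVneq i 0) => [e|/eqP ne]; last by apply/andP; split; apply/eqP; lia.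
  subst i; rewrite size_ins in h2.
  by move: h4; rewrite ins0_0 ins0_1 ?t0 //; lia.
- move=> i j k /and5P [h1 h2 h3 h4 h5] hor.
  have e : i = 0 by move: hor => /orP [/orP [/eqP //|/eqP]|/eqP]; lia.
  subst i; move: h5 h4; rewrite ins0_0; lia.
- move=> a b c d e /and5P [h1 h2 h3 h4 /and5P [h5 h6 h7 h8 h9]] hor.
  have e0 : a = 0 by move: hor => /orP [/eqP|/orP [/eqP|/orP [/eqP|/orP [/eqP|/eqP]]]]; lia.
  subst a; move: h6 h7; rewrite ins0_0; lia.
Qed.

Ltac orcases H := move: H => /orP [/eqP ?|/orP [/eqP ?|/orP [/eqP ?|/orP [/eqP ?|/eqP ?]]]].
Ltac orcases3 H := move: H => /orP [/orP [/eqP ?|/eqP ?]|/eqP ?].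

Lemma E2_up (t : seq nat) : uniq t -> good t -> 2 <= size t -> 1 <= t !! 0 -> t !! 1 = 0 ->
  good (ins 2 1 t).
Proof.
move=> ut g st t0 t1.
have us : uniq (ins 2 1 t) by rewrite uniq_ins.
have ss : size (ins 2 1 t) = (size t).+1 := size_ins _ _ _.
have s0 : (ins 2 1 t) !! 0 = (t !! 0).+1 by rewrite ins2_0 // bumpE; case: ifP; lia.
have s1 : (ins 2 1 t) !! 1 = 0 by rewrite ins2_1 // t1.
have s2 : (ins 2 1 t) !! 2 = 1 by rewrite nth_ins_p.
have z : forall x, x < (size t).+1 -> (ins 2 1 t) !! x < 1 -> x = 1.
  move=> x hx hv; apply: (nth_inj us); rewrite ?ss //; lia.
apply: good_up => //.
- move=> i j /and5P [h1 h2 h3 h4 h5]; rewrite ss in h2.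
  have i1 : i != 1 by apply/eqP => e; subst i; lia.
  have i2 : i != 2.
    apply/eqP => e; subst i; have : j = 1 by apply: (z j h2); lia.
    lia.
  have j2 : j != 2.
    apply/eqP => e; subst j; have e : i = 0 by lia.
    by subst i; lia.
  by rewrite i2 j2 /=; apply/eqP; lia.
- move=> i j k /and5P [h1 h2 h3 h4 h5] hor; rewrite ss in h3; orcases3 hor; subst.
  + exfalso; have : j = 1 by apply: z; lia.
    lia.
  + exfalso; have : k = 1 by apply: z; lia.
    lia.
  + exfalso; have e : i = 0 by lia.
    have e' : j = 1 by lia.
    subst; lia.
- move=> a b c d e /and5P [h1 h2 h3 h4 /and5P [h5 h6 h7 h8 h9]] hor.
  rewrite ss in h5; exfalso; orcases hor; subst; try lia.
  case: (eqVneq a 1) => [ea|/eqP na]; first by subst; lia.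
    have ea : a = 0 by lia.
    subst a; move: g => [_ [_ g5]]; apply: g5.
    apply: (@c31524_down 2 1 t 0 1 c d e) => //; try (apply/eqP; lia).
  by rewrite /occ5 ss; apply/and5P; split; try lia; apply/and5P; split; lia.
Qed.

Lemma E3_up (t : seq nat) : uniq t -> good t -> 2 <= size t -> 2 <= t !! 0 -> t !! 1 = 0 ->
  good (ins 2 (t !! 0).+1 t).
Proof.
move=> ut g st t0 t1.
have us : uniq (ins 2 (t !! 0).+1 t) by rewrite uniq_ins.
have ss : size (ins 2 (t !! 0).+1 t) = (size t).+1 := size_ins _ _ _.
have s0 : (ins 2 (t !! 0).+1 t) !! 0 = t !! 0 by rewrite ins2_0 // bumpE; case: ifP; lia.
have s1 : (ins 2 (t !! 0).+1 t) !! 1 = 0 by rewrite ins2_1 // t1.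
have s2 : (ins 2 (t !! 0).+1 t) !! 2 = (t !! 0).+1 by rewrite nth_ins_p.
have z : forall x, x < (size t).+1 -> (ins 2 (t !! 0).+1 t) !! x = t !! 0 -> x = 0.
  move=> x hx hv; apply: (nth_inj us); rewrite ?ss //; lia.
move: g => [gf [g3 g5]].
apply: good_up => //.
- move=> i j /and5P [h1 h2 h3 h4 h5]; rewrite ss in h2.
  have i1 : i != 1 by apply/eqP => e; subst i; lia.
  have i2 : i != 2.
    apply/eqP => e; subst i; have : j = 0 by apply: (z j h2); lia.
    lia.
  have j2 : j != 2.
    apply/eqP => e; subst j; have e : i = 0 by lia.
    by subst i; lia.
  by rewrite i2 j2 /=; apply/eqP; lia.
- move=> i j k /and5P [h1 h2 h3 h4 h5] hor; rewrite ss in h3; exfalso; orcases3 hor; subst.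
  + have hj : (ins 2 (t !! 0).+1 t) !! j != t !! 0.
      by apply/eqP => /(z j) e; lia.
    apply: g3; apply: (@c321_down 2 (t !! 0).+1 t 0 j k) => //; try (apply/eqP; lia).
    rewrite /occ3 ss; apply/and5P; split; lia.
  + by case: (ltnP i 1) => hi; [have e : i = 0 by lia| have e : i = 1 by lia]; subst; lia.
  + have e : i = 0 by lia.
    have e' : j = 1 by lia.
    subst; lia.
- move=> a b c d e /and5P [h1 h2 h3 h4 /and5P [h5 h6 h7 h8 h9]] hor.
  rewrite ss in h5; exfalso; orcases hor; subst; try lia.
  + have hd : (ins 2 (t !! 0).+1 t) !! d != t !! 0.
      by apply/eqP => /(z d) e0; lia.
    apply: g5; apply: (@c31524_down 2 (t !! 0).+1 t 0 b c d e) => //; try (apply/eqP; lia).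
    by rewrite /occ5 ss; apply/and5P; split; try lia; apply/and5P; split; lia.
  + by case: (ltnP a 1) => hi; [have e0 : a = 0 by lia| have e0 : a = 1 by lia]; subst; lia.
  + have e0 : a = 0 by lia.
    have e1 : b = 1 by lia.
    subst; lia.
Qed.

Lemma E0_down (t : seq nat) : good (ins 0 0 t) -> good t.
Proof. by move=> g; apply: (good_down _ g) => // i j _. Qed.

Lemma E1_down (t : seq nat) : uniq t -> t !! 0 = 0 -> good (ins 0 1 t) -> good t.
Proof.
move=> ut t0 g; apply: (good_down _ g) => // i j /and5P [h1 h2 h3 h4 h5] /=.
apply/eqP => e; have : j = 0 by apply: (nth_inj ut) => //; lia.
lia.
Qed.

Lemma E2_down (t : seq nat) v : uniq t -> 2 <= size t -> t !! 1 = 0 ->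
  (forall j, j < size t -> (t !! j).+1 = v -> j <= 1) ->
  good (ins 2 v t) -> good t.
Proof.
move=> ut st t1 hv g; apply: (good_down _ g) => // i j /and5P [h1 h2 h3 h4 h5].
have i1 : i != 1 by apply/eqP => e; subst; lia.
rewrite i1 /=; apply/eqP => /(hv j h2) hj.
have e : i = 0 by lia.
have e' : j = 1 by lia.
subst; lia.
Qed.

Lemma isperm_pos (n : nat) (s : seq nat) x : isperm n s -> x < n -> exists2 q, q < n & s !! q = x.
Proof.
case/and3P => /eqP hs hu ha hx.
have hsub : {subset s <= iota 0 n}.
  by move=> y hy; rewrite mem_iota add0n; move/allP: ha => /(_ y hy).
have [_ e] : (size s = size (iota 0 n)) * (s =i iota 0 n).
  by apply: uniq_min_size => //; rewrite size_iota hs.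
have hxs : x \in s by rewrite e mem_iota.
exists (index x s); first by rewrite -hs index_mem.
exact: nth_index.
Qed.

Lemma isperm_val (n : nat) (s : seq nat) q : isperm n s -> q < n -> s !! q < n.
Proof.
case/and3P => /eqP hs hu ha hq; move/allP: ha; apply; apply: mem_nth; by rewrite hs.
Qed.

Lemma isperm_inj (n : nat) (s : seq nat) i j : isperm n s -> i < n -> j < n -> s !! i = s !! j -> i = j.
Proof. by case/and3P => /eqP hs hu ha hi hj; apply: nth_inj; rewrite ?hs. Qed.

Ltac small3 r := case: (ltnP 2 r) => //;
  rewrite leq_eqVlt ltnS leq_eqVlt ltnS leqn0 => /orP [/eqP ?|/orP [/eqP ?|/eqP ?]]; subst r.

Lemma S1 (n : nat) (s : seq nat) : isperm n s -> good s -> 1 <= s !! 0 -> 2 <= n /\ s !! 1 = 0.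
Proof.
move=> ip [gf [g3 g5]] h0.
have hn : 0 < n.
  case: n ip => // /and3P [/eqP hs _ _]; move: h0; rewrite (size0nil hs).
  by [].
have k_lt := isperm_val ip hn.
have [r hr sr] := isperm_pos ip (x := (s !! 0).-1) (ltac:(lia)).
have r0 : r != 0 by apply/eqP => e; subst; lia.
have hn2 : 2 <= n by lia.
have hsz : size s = n by case/and3P: ip => /eqP.
have s1k : s !! 1 < s !! 0.
  case: (ltnP (s !! 0) (s !! 1)) => hh.
    have : viol s 0 r by rewrite /viol hsz; apply/and5P; split; lia.
    by rewrite (negbTE (gf 0 r)).
  have ne : s !! 1 <> s !! 0 by move=> /(isperm_inj ip) => /(_ ltac:(lia) ltac:(lia)).
  lia.
split=> //.
have [q hq sq] := isperm_pos ip (x := 0) hn.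
have q0 : q != 0 by apply/eqP => e; subst; lia.
case: (eqVneq q 1) => [e|q1]; first by subst.
exfalso; apply: g3; exists 0, 1, q; rewrite /occ3 hsz.
have ne : s !! 1 <> 0.
  move=> e; have : 1 = q by apply: (isperm_inj ip) => //; try lia; rewrite e sq.
  lia.
apply/and5P; split; lia.
Qed.

Lemma S2 (n : nat) (s : seq nat) : isperm n s -> good s -> 2 <= s !! 0 ->
  [/\ 3 <= n, s !! 1 = 0 & (s !! 2 = 1 \/ s !! 2 = (s !! 0).+1)].
Proof.
move=> ip g h0.
have [hn2 s1] := S1 ip g (ltac:(lia)).
move: g => [gf [g3 g5]].
have hsz : size s = n by case/and3P: ip => /eqP.
have k_lt := isperm_val ip (ltac:(lia) : 0 < n).
have hn3 : 3 <= n by lia.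
split=> //.
have x_lt := isperm_val ip (ltac:(lia) : 2 < n).
have inj := isperm_inj ip.
have x0 : s !! 2 <> 0 by move=> e; have := inj 2 1; lia.
have xk : s !! 2 <> s !! 0 by move=> e; have := inj 2 0; lia.
case: (ltnP (s !! 2) (s !! 0)) => hx.
  left.
  have [q hq sq] := isperm_pos ip (x := 1) (ltac:(lia)).
  have q0 : q <> 0 by move=> e; subst; lia.
  have q1 : q <> 1 by move=> e; subst; lia.
  case: (eqVneq q 2) => [e|/eqP q2]; first by subst.
  exfalso; apply: g3; exists 0, 2, q; rewrite /occ3 hsz.
  have xne : s !! 2 <> 1 by move=> e; have := inj 2 q; lia.
  apply/and5P; split; lia.
right.
case: (eqVneq (s !! 2) (s !! 0).+1) => [//|/eqP hne]; exfalso.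
have [r hr sr] := isperm_pos ip (x := (s !! 0).-1) (ltac:(lia)).
have [q hq sq] := isperm_pos ip (x := (s !! 0).+1) (ltac:(lia)).
have r3 : 2 < r by small3 r; lia.
have q3 : 2 < q by small3 q; lia.
have rq : r <> q by move=> e; subst; lia.
case: (ltnP q r) => hqr.
  apply: g3; exists 2, q, r; rewrite /occ3 hsz; apply/and5P; split; lia.
apply: g5; exists 0, 1, 2, r, q; rewrite /occ5 hsz.
apply/and5P; split; try lia; apply/and5P; split; lia.
Qed.

Fixpoint L (n : nat) : seq (seq nat) :=
  match n with
  | 0 => [:: [::]]
  | m.+1 => [seq ins 0 0 t | t <- L m]
      ++ (match m with 0 => [::] | k.+1 => [seq ins 0 1 (ins 0 0 t) | t <- L k] end)
      ++ [seq ins 2 1 t | t <- L m & 1 <= t !! 0]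
      ++ [seq ins 2 (t !! 0).+1 t | t <- L m & 2 <= t !! 0]
  end.

Lemma good_nil : good [::].
Proof.
split; first by move=> i j; apply/negP => /and5P [? ? ? ? ?].
split; first by move=> [i [j [k /and5P [? ? ? ? ?]]]].
by move=> [a [b [c [d [e /and5P [? ? ? ? /and5P [? ? ? ? ?]]]]]]].
Qed.

Lemma isperm_uniq (n : nat) (s : seq nat) : isperm n s -> uniq s.
Proof. by case/and3P. Qed.
Lemma isperm_size (n : nat) (s : seq nat) : isperm n s -> size s = n.
Proof. by case/and3P => /eqP. Qed.

Lemma L_complete (n : nat) : forall s, s \in L n -> isperm n s /\ good s.
Proof.
elim/ltn_ind: n => n IH s.
case: n IH => [|m] IH.
  by rewrite inE => /eqP ->; split; [by [] | exact: good_nil].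
rewrite /= !mem_cat => /orP [|/orP [|/orP []]].
- move=> /mapP [t ht ->]; have [ip g] := IH m (ltnSn m) t ht.
  by split; [apply: isperm_ins | apply: E0_up].
- case: m IH => [//|k] IH /mapP [t ht ->].
  have [ip g] := IH k (ltnW (ltnSn k.+1)) t ht.
  have ipu : isperm k.+1 (ins 0 0 t) by apply: isperm_ins.
  split; first by apply: isperm_ins.
  by apply: E1_up; [apply: E0_up | apply: ins0_0].
- move=> /mapP [t]; rewrite mem_filter => /andP [h0 ht] ->.
  have [ip g] := IH m (ltnSn m) t ht.
  have [hm t1] := S1 ip g h0.
  split; first by apply: isperm_ins; lia.
  apply: E2_up => //; [exact: isperm_uniq ip | by rewrite (isperm_size ip)].
- move=> /mapP [t]; rewrite mem_filter => /andP [h0 ht] ->.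
  have [ip g] := IH m (ltnSn m) t ht.
  have [hm t1] := S1 ip g (ltac:(lia)).
  have := isperm_val ip (ltac:(lia) : 0 < m) => hv.
  split; first by apply: isperm_ins; lia.
  apply: E3_up => //; [exact: isperm_uniq ip | by rewrite (isperm_size ip)].
Qed.

Lemma bump_eq0 v x : 0 < v -> bump v x = 0 -> x = 0.
Proof. bsolve. Qed.

Lemma L_sound (n : nat) : forall s, isperm n s -> good s -> s \in L n.
Proof.
elim/ltn_ind: n => n IH s ip g.
have hsz := isperm_size ip; have hu := isperm_uniq ip.
case: n IH ip hsz => [|m] IH ip hsz.
  by move/size0nil: hsz => ->; rewrite inE.
rewrite /= !mem_cat.
case: (ltnP (s !! 0) 1) => h0.
-
  have es : ins 0 0 (del 0 s) = s.
    by have := ins_del hu (p := 0) (ltac:(lia)); have -> : s !! 0 = 0 by lia.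
  have ipt : isperm m (del 0 s) by apply: (@isperm_ins_inv m 0 0); rewrite es.
  have gt : good (del 0 s) by apply: E0_down; rewrite es.
  apply/orP; left; rewrite -{1}es; apply: map_f; exact: IH.
case: (ltnP (s !! 0) 2) => h1.
-
  have [hm s1] := S1 ip g h0.
  case: m IH ip hsz hm => [//|k] IH ip hsz hm.
  set u := del 0 s.
  have es : ins 0 1 u = s.
    by have := ins_del hu (p := 0) (ltac:(lia)); have -> : s !! 0 = 1 by lia.
  have ipu : isperm k.+1 u by apply: (@isperm_ins_inv k.+1 0 1); rewrite es.
  have u0 : u !! 0 = 0.
    apply: (@bump_eq0 1) => //; rewrite -ins0_1 ?es //.
    by rewrite (isperm_size ipu).
  have gu : good u by apply: (E1_down (isperm_uniq ipu)) => //; rewrite es.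
  have eu : ins 0 0 (del 0 u) = u.
    have := ins_del (isperm_uniq ipu) (p := 0); rewrite u0 (isperm_size ipu); apply; lia.
  have ipt : isperm k (del 0 u) by apply: (@isperm_ins_inv k 0 0); rewrite eu.
  have gt : good (del 0 u) by apply: E0_down; rewrite eu.
  apply/orP; right; apply/orP; left; rewrite -{1}es -{1}eu; apply: map_f; apply: IH => //; lia.
have [hm3 s1 s2] := S2 ip g h1.
set t := del 2 s.
have es : ins 2 (s !! 2) t = s by apply: ins_del; lia.
have ipt : isperm m t by apply: (@isperm_ins_inv m 2 (s !! 2)); rewrite es.
have st : size t = m := isperm_size ipt.
have ut := isperm_uniq ipt.
have e0 : s !! 0 = bump (s !! 2) (t !! 0) by rewrite -{1}es ins2_0 //; lia.
have e1 : s !! 1 = bump (s !! 2) (t !! 1) by rewrite -{1}es ins2_1 //; lia.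
have t1 : t !! 1 = 0 by apply: (@bump_eq0 (s !! 2)); lia.
have tinj := isperm_inj ipt.
case: s2 => s2.
- have t0 : 1 <= t !! 0 by move: e0; rewrite s2; bsolve.
  have gt : good t.
    apply: (@E2_down t 1) => //; first by lia.
      move=> j hj hv; have : j = 1 by apply: tinj; lia.
      lia.
    by have es1 := es; rewrite s2 in es1; rewrite es1.
  apply/orP; right; apply/orP; right; apply/orP; left.
  have es1 := es; rewrite s2 in es1; rewrite -es1.
  by apply: map_f; rewrite mem_filter t0 IH.
- have t0 : t !! 0 = s !! 0 by move: e0; rewrite s2; bsolve.
  have gt : good t.
    apply: (@E2_down t (s !! 0).+1) => //; first by lia.
      move=> j hj hv; have : j = 0 by apply: tinj; lia.
      lia.
    by have es1 := es; rewrite s2 in es1; rewrite es1.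
  apply/orP; right; apply/orP; right; apply/orP; right.
  have es1 := es; rewrite s2 -t0 in es1; rewrite -es1.
  by apply: map_f; rewrite mem_filter IH // andbT; lia.
Qed.

Definition h1 n := count (fun t => 1 <= t !! 0) (L n).
Definition h2 n := count (fun t => 2 <= t !! 0) (L n).

Lemma L_mem_size m t : t \in L m -> 1 <= t !! 0 -> 2 <= size t /\ t !! 1 = 0.
Proof.
move=> ht h0; have [ip g] := L_complete ht; have [hm t1] := S1 ip g h0.
by rewrite (isperm_size ip).
Qed.

Lemma head3 m t : t \in L m -> 1 <= t !! 0 -> (ins 2 1 t) !! 0 = (t !! 0).+1.
Proof. move=> ht h0; have [hs _] := L_mem_size ht h0; rewrite ins2_0 //; bsolve. Qed.
Lemma head4 m t : t \in L m -> 2 <= t !! 0 -> (ins 2 (t !! 0).+1 t) !! 0 = t !! 0.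
Proof. move=> ht h0; have [hs _] := L_mem_size ht (ltac:(lia)); rewrite ins2_0 //; bsolve. Qed.

Lemma count_all_in (P : pred (seq nat)) (l : seq (seq nat)) :
  (forall x, x \in l -> P x) -> count P l = size l.
Proof. by move=> h; rewrite -(count_predT l); apply: eq_in_count => x /h ->. Qed.
Lemma count_none_in (P : pred (seq nat)) (l : seq (seq nat)) :
  (forall x, x \in l -> ~~ P x) -> count P l = 0.
Proof. by move=> h; apply/eqP; rewrite -leqn0 leqNgt -has_count; apply/hasPn. Qed.

Definition Lrest m := match m with 0 => [::] | k.+1 => [seq ins 0 1 (ins 0 0 t) | t <- L k] end.
Lemma L_S m : L m.+1 = [seq ins 0 0 t | t <- L m] ++ Lrest m
      ++ [seq ins 2 1 t | t <- L m & 1 <= t !! 0]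
      ++ [seq ins 2 (t !! 0).+1 t | t <- L m & 2 <= t !! 0].
Proof. by []. Qed.
Definition sz m := match m with 0 => 0 | k.+1 => size (L k) end.
Lemma size_Lrest m : size (Lrest m) = sz m.
Proof. by case: m => //= k; rewrite size_map. Qed.

Lemma recA m : size (L m.+1) = size (L m) + sz m + h1 m + h2 m.
Proof.
by rewrite L_S !size_cat !size_map !size_filter size_Lrest /h1 /h2 !addnA.
Qed.

Lemma recH1 m : h1 m.+1 = sz m + h1 m + h2 m.
Proof.
rewrite {1}/h1 L_S !count_cat.
rewrite (count_none_in (l := [seq ins 0 0 t | t <- L m])); last first.
  by move=> x /mapP [t _ ->]; rewrite ins0_0.
rewrite (count_all_in (l := [seq ins 2 1 t | t <- L m & 1 <= t !! 0])); last first.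
  by move=> x /mapP [t]; rewrite mem_filter => /andP [h ht] ->; rewrite (head3 ht h).
rewrite (count_all_in (l := [seq ins 2 (t !! 0).+1 t | t <- L m & 2 <= t !! 0])); last first.
  by move=> x /mapP [t]; rewrite mem_filter => /andP [h ht] ->; rewrite (head4 ht h); lia.
rewrite !size_map !size_filter /h1 /h2 add0n addnA -size_Lrest; congr (_ + _ + _).
case: m => [//|k]; rewrite count_all_in //.
by move=> x /mapP [t _ ->]; rewrite ins0_0.
Qed.

Lemma recH2 m : h2 m.+1 = h1 m + h2 m.
Proof.
rewrite {1}/h2 L_S !count_cat.
rewrite (count_none_in (l := [seq ins 0 0 t | t <- L m])); last first.
  by move=> x /mapP [t _ ->]; rewrite ins0_0.
rewrite (count_all_in (l := [seq ins 2 1 t | t <- L m & 1 <= t !! 0])); last first.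
  by move=> x /mapP [t]; rewrite mem_filter => /andP [h ht] ->; rewrite (head3 ht h).
rewrite (count_all_in (l := [seq ins 2 (t !! 0).+1 t | t <- L m & 2 <= t !! 0])); last first.
  by move=> x /mapP [t]; rewrite mem_filter => /andP [h ht] ->; rewrite (head4 ht h); lia.
rewrite !size_map !size_filter /h1 /h2 add0n.
case: m => [//|k]; rewrite count_none_in //.
by move=> x /mapP [t _ ->]; rewrite ins0_0.
Qed.

Lemma pellSS m : pell m.+2 = 2 * pell m.+1 + pell m.
Proof. by []. Qed.

Lemma closed_form m :
  [/\ pell m.+1 + 1 = pell m + 2 * size (L m),
      pell m.+2 + 1 = pell m.+1 + 2 * size (L m.+1),
      h1 m.+2 = pell m.+1 & h2 m.+2 + size (L m) = pell m.+1].
Proof.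
elim: m => [|m [IH1 IH2 IH3 IH4]]; first by vm_compute.
have eA := recA m.+1.
have eH1 := recH1 m.+1.
have eH2 := recH2 m.+1.
have eH1' := recH1 m.+2.
have eH2' := recH2 m.+2.
rewrite /sz in eA eH1 eH1'.
have p3 := pellSS m.+1.
have p4 := pellSS m.+2.
have p2 := pellSS m.
split; lia.
Qed.

Lemma del_ins p v (t : seq nat) : p <= size t -> del p (ins p v t) = t.
Proof.
move=> hp; rewrite /del nth_ins_p // /ins.
have hA : size (take p (map (bump v) t)) = p by rewrite size_take size_map; case: ltnP; lia.
rewrite take_size_cat // drop_cat hA (_ : p.+1 < p = false); last by lia.
rewrite subSnn /= drop0 cat_take_drop -map_comp.
by rewrite (eq_map (bumpK v)) map_id.
Qed.

Definition key (x : seq nat) := if x !! 0 < 2 then x !! 0 else if x !! 2 == 1 then 2 else 3.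

Lemma nohas (A B : seq (seq nat)) a : (forall x, x \in A -> key x = a) ->
  (forall x, x \in B -> key x != a) -> ~~ has (mem A) B.
Proof.
move=> hA hB; apply/hasPn => x /hB; apply: contra => /hA ->; by [].
Qed.

Lemma key1 m x : x \in [seq ins 0 0 t | t <- L m] -> key x = 0.
Proof. by move=> /mapP [t _ ->]; rewrite /key ins0_0. Qed.
Lemma key2 m x : x \in Lrest m -> key x = 1.
Proof. by case: m => //= k /mapP [t _ ->]; rewrite /key ins0_0. Qed.
Lemma key3 m x : x \in [seq ins 2 1 t | t <- L m & 1 <= t !! 0] -> key x = 2.
Proof.
move=> /mapP [t]; rewrite mem_filter => /andP [h ht] ->.
rewrite /key (head3 ht h) nth_ins_p; last by have [] := L_mem_size ht h.
by have -> : (t !! 0).+1 < 2 = false by lia.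
Qed.
Lemma key4 m x : x \in [seq ins 2 (t !! 0).+1 t | t <- L m & 2 <= t !! 0] -> key x = 3.
Proof.
move=> /mapP [t]; rewrite mem_filter => /andP [h ht] ->.
rewrite /key (head4 ht h) nth_ins_p; last by have [] := L_mem_size ht (ltac:(lia)).
have -> : t !! 0 < 2 = false by lia.
by have -> : ((t !! 0).+1 == 1) = false by apply/eqP; lia.
Qed.

Lemma L_uniq n : uniq (L n).
Proof.
elim/ltn_ind: n => n IH; case: n IH => [//|m] IH.
have IHm : uniq (L m) by apply: IH.
rewrite L_S !cat_uniq; repeat (apply/andP; split).
- rewrite map_inj_uniq // => t1 t2 e.
  by rewrite -(@del_ins 0 0 t1) // e del_ins.
- apply: (@nohas _ _ 0); first by move=> x /key1.
  by move=> x; rewrite !mem_cat => /orP [/key2 ->|/orP [/key3 ->|/key4 ->]].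
- case: m IH IHm => [//|k] IH IHm /=.
  rewrite map_inj_uniq; first by apply: IH; lia.
  by move=> t1 t2 e; rewrite -(@del_ins 0 0 t1) // -(@del_ins 0 1 (ins 0 0 t1)) // e !del_ins.
- apply: (@nohas _ _ 1); first by move=> x /key2.
  by move=> x; rewrite !mem_cat => /orP [/key3 ->|/key4 ->].
- rewrite map_inj_in_uniq ?filter_uniq // => t1 t2.
  rewrite !mem_filter => /andP [h1 ht1] /andP [h2 ht2] e.
  have [s1 _] := L_mem_size ht1 h1; have [s2 _] := L_mem_size ht2 h2.
  by rewrite -(@del_ins 2 1 t1) // e del_ins.
- apply: (@nohas _ _ 2); first by move=> x /key3.
  by move=> x /key4 ->.
- rewrite map_inj_in_uniq ?filter_uniq // => t1 t2.
  rewrite !mem_filter => /andP [h1 ht1] /andP [h2 ht2] e.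
  have [s1 _] := L_mem_size ht1 (ltac:(lia)); have [s2 _] := L_mem_size ht2 (ltac:(lia)).
  have e0 : t1 !! 0 = t2 !! 0.
    have := congr1 (fun x => x !! 2) e; rewrite /= !nth_ins_p //; lia.
  by rewrite -(@del_ins 2 (t1 !! 0).+1 t1) // e del_ins.
Qed.

Definition phi (n : nat) (s : {perm 'I_n}) : seq nat := [seq val (s i) | i <- enum 'I_n].

Lemma size_phi n (s : {perm 'I_n}) : size (phi s) = n.
Proof. by rewrite /phi size_map size_enum_ord. Qed.

Lemma nth_phi n (s : {perm 'I_n}) (i : 'I_n) : (phi s) !! i = s i.
Proof.
rewrite /phi (nth_map i); last by rewrite size_enum_ord.
by rewrite nth_ord_enum.
Qed.

Lemma isperm_phi n (s : {perm 'I_n}) : isperm n (phi s).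
Proof.
apply/and3P; split; first by rewrite size_phi.
  rewrite map_inj_uniq ?enum_uniq // => i j /val_inj; exact: perm_inj.
by apply/allP => x /mapP [i _ ->]; exact: ltn_ord.
Qed.

Lemma phi_inj n : injective (@phi n).
Proof.
move=> s1 s2 e; apply/permP => i; apply/val_inj.
by have := congr1 (fun l => l !! i) e; rewrite /= !nth_phi.
Qed.

Lemma phi_surj (n : nat) (l : seq nat) : isperm n l -> exists s : {perm 'I_n}, phi s = l.
Proof.
move=> ip.
pose f (i : 'I_n) : 'I_n := Ordinal (isperm_val ip (ltn_ord i)).
have finj : injective f.
  move=> i j /(congr1 val) /= e; apply/val_inj => /=.
  exact: (isperm_inj ip (ltn_ord i) (ltn_ord j) e).
exists (perm finj).
apply: (@eq_from_nth _ 0); first by rewrite size_phi (isperm_size ip).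
move=> i; rewrite size_phi => hi.
by rewrite -[i]/(val (Ordinal hi)) nth_phi permE.
Qed.

Lemma fish_equiv n (s : {perm 'I_n}) : fishburn s <-> fishL (phi s).
Proof.
split.
  move=> hf i j; apply/negP => /and5P [h1 h2 h3 h4 h5].
  rewrite size_phi in h2.
  move/negP: hf; apply; apply/existsP; exists (Ordinal (ltn_trans h1 h2)).
  apply/existsP; exists (Ordinal h2).
  have hi1 : i.+1 < n by lia.
  apply/existsP; exists (Ordinal hi1).
  move: h3 h4 h5.
  rewrite -[i]/(val (Ordinal (ltn_trans h1 h2))) -[j]/(val (Ordinal h2)) -[i.+1]/(val (Ordinal hi1)).
  rewrite !nth_phi /=; lia.
move=> hf; apply/negP => /existsP [i /existsP [j /existsP [i1 H]]].
move/and5P: H => [/eqP e1 h2 h3 h4 /eqP h5].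
have e2 : (phi s) !! (val i).+1 = val (s i1) by rewrite -e1 nth_phi.
have := hf i j; rewrite /viol size_phi ltn_ord e2 !nth_phi.
move=> /negP; apply; rewrite h2 h3 h4 /= h5; exact: leqnn.
Qed.

Lemma c321_equiv n (s : {perm 'I_n}) : contains s [:: 3; 2; 1] <-> c321 (phi s).
Proof.
split.
  case/existsP => f /forallP H.
  pose o0 : 'I_(size [:: 3; 2; 1]) := @Ordinal 3 0 isT.
  pose o1 : 'I_(size [:: 3; 2; 1]) := @Ordinal 3 1 isT.
  pose o2 : 'I_(size [:: 3; 2; 1]) := @Ordinal 3 2 isT.
  have H01 := forallP (H o0) o1; have H12 := forallP (H o1) o2.
  have H10 := forallP (H o1) o0; have H21 := forallP (H o2) o1.
  move: H01 H12 H10 H21; move: (f o0) (f o1) (f o2) => x0 x1 x2 /= H01 H12 H10 H21.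
  exists x0, x1, x2; rewrite /occ3 size_phi !nth_phi ltn_ord.
  apply/and5P; split; lia.
move=> [i [j [k /and5P [h1 h2 h3 h4 h5]]]]; rewrite size_phi in h3.
have pf : forall a : 'I_3, nth 0 [:: i; j; k] a < n.
  by case=> [[|[|[|a]]] ha] //=; lia.
apply/existsP; exists [ffun a : 'I_3 => Ordinal (pf a)].
apply/forallP => a; apply/forallP => b; rewrite !ffunE.
rewrite -(nth_phi s (Ordinal (pf a))) -(nth_phi s (Ordinal (pf b))) /=.
by case: a => [[|[|[|a]]] ha]; case: b => [[|[|[|b]]] hb] //=; lia.
Qed.

Lemma c31524_equiv n (s : {perm 'I_n}) : contains s [:: 3; 1; 5; 2; 4] <-> c31524 (phi s).
Proof.
split.
  case/existsP => f /forallP H.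
  pose o0 : 'I_(size [:: 3; 1; 5; 2; 4]) := @Ordinal 5 0 isT.
  pose o1 : 'I_(size [:: 3; 1; 5; 2; 4]) := @Ordinal 5 1 isT.
  pose o2 : 'I_(size [:: 3; 1; 5; 2; 4]) := @Ordinal 5 2 isT.
  pose o3 : 'I_(size [:: 3; 1; 5; 2; 4]) := @Ordinal 5 3 isT.
  pose o4 : 'I_(size [:: 3; 1; 5; 2; 4]) := @Ordinal 5 4 isT.
  have H01 := forallP (H o0) o1; have H12 := forallP (H o1) o2.
  have H23 := forallP (H o2) o3; have H34 := forallP (H o3) o4.
  have H13 := forallP (H o1) o3; have H30 := forallP (H o3) o0.
  have H04 := forallP (H o0) o4; have H42 := forallP (H o4) o2.
  move: H01 H12 H23 H34 H13 H30 H04 H42.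
  move: (f o0) (f o1) (f o2) (f o3) (f o4) => x0 x1 x2 x3 x4 /= H01 H12 H23 H34 H13 H30 H04 H42.
  exists x0, x1, x2, x3, x4; rewrite /occ5 size_phi !nth_phi ltn_ord.
  apply/and5P; split; try lia; apply/and5P; split; lia.
move=> [a [b [c [d [e /and5P [h1 h2 h3 h4 /and5P [h5 h6 h7 h8 h9]]]]]]].
rewrite size_phi in h5.
have pf : forall x : 'I_5, nth 0 [:: a; b; c; d; e] x < n.
  by case=> [[|[|[|[|[|x]]]]] hx] //=; lia.
apply/existsP; exists [ffun x : 'I_5 => Ordinal (pf x)].
apply/forallP => x; apply/forallP => y; rewrite !ffunE.
rewrite -(nth_phi s (Ordinal (pf x))) -(nth_phi s (Ordinal (pf y))) /=.
by case: x => [[|[|[|[|[|x]]]]] hx]; case: y => [[|[|[|[|[|y]]]]] hy] //=; lia.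
Qed.

Lemma card_F n : #|F321_31524 n| = size (L n).
Proof.
set M := [seq phi s | s <- enum (F321_31524 n)].
have uM : uniq M by rewrite map_inj_uniq ?enum_uniq //; exact: phi_inj.
have eM : M =i L n.
  move=> l; apply/idP/idP.
  - move=> /mapP [s]; rewrite mem_enum inE => /andP [/andP [hf h3] h5] ->.
    apply: L_sound; first exact: isperm_phi.
    split; first by apply/fish_equiv.
    split.
      by move/c321_equiv => H; move/negP: h3.
    by move/c31524_equiv => H; move/negP: h5.
  - move=> hl; have [ip g] := L_complete hl; have [s es] := phi_surj ip.
    rewrite -es in g *; apply: map_f; rewrite mem_enum inE.
    move: g => [gf [g3 g5]].
    apply/andP; split; first (apply/andP; split).
    + by apply/fish_equiv.
    + by apply/negP => /c321_equiv.
    + by apply/negP => /c31524_equiv.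
have := perm_size (uniq_perm uM (L_uniq n) eM).
by rewrite size_map -cardE.
Qed.

Unset Implicit Arguments.

Theorem mainTheorem19 (n : nat) : 1 <= n ->
  2 * #|F321_31524 n| = pell n + pell n.-1 + 1.
Proof.
move=> hn; rewrite card_F.
case: n hn => [//|m] _.
have [_ h2 _ _] := closed_form m.
rewrite [m.+1.-1]/=; have := pellSS m; lia.
Qed.
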